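(* Let $n\ge 2$. The number $\eta_n$ of all unordered pairs of disjoint $n^2\times n^2$ S-permutation matrices equals $$\eta_n=\frac{(n!)^{2n}}{2}\,\xi_n,\qquad\text{where}\qquad \xi_n=\sum_{\overline{A}\in\overline{\mathfrak{B}}_n,\ \varepsilon(\overline{A})\ge 2}(-1)^{\varepsilon(\overline{A})}\,|\overline{A}|\prod_{i=0}^{n-2}\left[(n-i)!\right]^{\psi_i(\overline{A})}.$$
   Context: An $n^2\times n^2$ S-permutation matrix is an $n^2\times n^2$ binary matrix which, when partitioned into $n^2$ non-intersecting consecutive $n\times n$ blocks, contains exactly one $1$ in each row, each column and each block. Two binary matrices $(a_{ij}),(b_{ij})$ of equal size are disjoint if there are no $i,j$ with $a_{ij}=b_{ij}=1$. $\mathfrak{B}_n$ is the set of $n\times n$ binary matrices. For $A\in\mathfrak{B}_n$, $r_k(A)$ (resp. $c_k(A)$) is the number of rows (resp. columns) of $A$ with exactly $k$ ones, $\psi_k(A)=r_k(A)+c_k(A)$, and $\varepsilon(A)$ is the total number of ones of $A$. $A\sim B$ iff $B$ is obtained from $A$ by permuting rows; $\overline{A}$ is the equivalence class of $A$, $|\overline{A}|$ its cardinality, $\overline{\mathfrak{B}}_n=\mathfrak{B}_n/\!\sim$; $\psi_k,\varepsilon$ are defined on classes via any representative. *)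

(* Defs.v *)
From mathcomp Require Import all_boot all_order all_algebra all_fingroup.
Set Implicit Arguments. Unset Strict Implicit. Unset Printing Implicit Defensive.
Import GRing.Theory Num.Theory.

Definition is_Sperm (n : nat) (A : 'M[bool]_(n ^ 2)) : bool :=
  [&& [forall i, #|[set j | A i j]| == 1],
      [forall j, #|[set i | A i j]| == 1] &
      [forall p : 'I_n, forall q : 'I_n,
         #|[set ij : 'I_(n ^ 2) * 'I_(n ^ 2) |
              [&& ij.1 %/ n == p, ij.2 %/ n == q & A ij.1 ij.2]]| == 1]].

Definition disjoint_mx (m : nat) (A B : 'M[bool]_m) : bool :=
  [forall i, forall j, ~~ (A i j && B i j)].

Definition Sperms (n : nat) : {set 'M[bool]_(n ^ 2)} := [set A | is_Sperm A].

Definition eta (n : nat) : nat :=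
  #|[set [set A; B] | A in Sperms n, B in Sperms n & disjoint_mx A B]|.

Definition rk (n k : nat) (A : 'M[bool]_n) : nat :=
  #|[set i | #|[set j | A i j]| == k]|.
Definition ck (n k : nat) (A : 'M[bool]_n) : nat :=
  #|[set j | #|[set i | A i j]| == k]|.
Definition psi (n k : nat) (A : 'M[bool]_n) : nat := rk k A + ck k A.
Definition eps (n : nat) (A : 'M[bool]_n) : nat :=
  #|[set ij : 'I_n * 'I_n | A ij.1 ij.2]|.

Definition row_equiv (n : nat) (A B : 'M[bool]_n) : Prop :=
  exists s : 'S_n, B = row_perm s A.
Definition row_equivb (n : nat) (A B : 'M[bool]_n) : bool :=
  [exists s : 'S_n, B == row_perm s A].

Definition cls (n : nat) (A : 'M[bool]_n) : {set 'M[bool]_n} :=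
  [set B | row_equivb A B].
Definition classes (n : nat) : {set {set 'M[bool]_n}} :=
  [set cls A | A : 'M[bool]_n].

Definition psiC (n k : nat) (C : {set 'M[bool]_n}) : nat :=
  if [pick A in C] is Some A then psi k A else 0.
Definition epsC (n : nat) (C : {set 'M[bool]_n}) : nat :=
  if [pick A in C] is Some A then eps A else 0.

Local Open Scope ring_scope.

Definition xi (n : nat) : int :=
  \sum_(C in classes n | (2 <= epsC C)%N)
     (-1) ^+ epsC C * (#|C|%:Z) *
     (\prod_(0 <= i < n.-1) (((n - i)`! ^ psiC i C)%N)%:Z).

(* Main.v *)
Require Import Defs.
From mathcomp Require Import all_boot all_order all_algebra all_fingroup.
From mathcomp Require Import zify ring.
Import GRing.Theory Num.Theory.
Set Implicit Arguments. Unset Strict Implicit. Unset Printing Implicit Defensive.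

Lemma hi_lt n (i : 'I_(n ^ 2)) : i %/ n < n.
Proof.
case: n i => [[]//|n] i; rewrite ltn_divLR //; have := ltn_ord i; rewrite expnS expn1 mulnC //.
Qed.
Lemma lo_lt n (i : 'I_(n ^ 2)) : i %% n < n.
Proof. by case: n i => [[]//|n] i; rewrite ltn_mod. Qed.
Lemma mk_lt n (p a : 'I_n) : p * n + a < n ^ 2.
Proof. have := ltn_ord p; have := ltn_ord a; rewrite expnS expn1; nia. Qed.

Definition hi n (i : 'I_(n ^ 2)) : 'I_n := Ordinal (hi_lt i).
Definition lo n (i : 'I_(n ^ 2)) : 'I_n := Ordinal (lo_lt i).
Definition mk n (p a : 'I_n) : 'I_(n ^ 2) := Ordinal (mk_lt p a).

Lemma hi_mk n (p a : 'I_n) : hi (mk p a) = p.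
Proof. apply: val_inj => /=; rewrite divnMDl ?divn_small ?addn0 //; by case: n p a => [[]|]. Qed.
Lemma lo_mk n (p a : 'I_n) : lo (mk p a) = a.
Proof. apply: val_inj => /=; rewrite modnMDl modn_small //. Qed.
Lemma mk_hilo n (i : 'I_(n ^ 2)) : mk (hi i) (lo i) = i.
Proof. apply: val_inj => /=; by rewrite -divn_eq. Qed.
Lemma mk_inj n (p a p' a' : 'I_n) : (mk p a == mk p' a') = (p == p') && (a == a').
Proof.
apply/eqP/andP => [e|[/eqP-> /eqP->]//]; split; apply/eqP.
  by rewrite -(hi_mk p a) e hi_mk. by rewrite -(lo_mk p a) e lo_mk.
Qed.
Lemma eq_hilo n (i : 'I_(n ^ 2)) p a : (i == mk p a) = (hi i == p) && (lo i == a).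
Proof. by rewrite -{1}(mk_hilo i) mk_inj. Qed.

Definition FT n := {ffun 'I_n -> {perm 'I_n}}.
Definition enc n (x : FT n * FT n) : 'M[bool]_(n ^ 2) :=
  \matrix_(i, j) ((x.1 (hi i) (hi j) == lo i) && (x.2 (hi j) (hi i) == lo j)).

Lemma encE n (x : FT n * FT n) i j :
  enc x i j = (x.1 (hi i) (hi j) == lo i) && (x.2 (hi j) (hi i) == lo j).
Proof. by rewrite mxE. Qed.

Lemma enc_Sperm n (x : FT n * FT n) : is_Sperm (enc x).
Proof.
apply/and3P; split.
- apply/forallP => i; apply/cards1P.
  set q := (x.1 (hi i))^-1%g (lo i).
  exists (mk q (x.2 q (hi i))); apply/setP => j; rewrite !inE encE eq_hilo.
  apply/andP/andP => [[/eqP e1 /eqP e2]|[/eqP e1 /eqP e2]].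
    have eq : hi j = q by rewrite /q -e1 permK.
    by rewrite eq in e2 *; rewrite e2.
  by rewrite e1 e2 /q permKV !eqxx.
- apply/forallP => j; apply/cards1P.
  set p := (x.2 (hi j))^-1%g (lo j).
  exists (mk p (x.1 p (hi j))); apply/setP => i; rewrite !inE encE eq_hilo.
  apply/andP/andP => [[/eqP e1 /eqP e2]|[/eqP e1 /eqP e2]].
    have eq : hi i = p by rewrite /p -e2 permK.
    by rewrite eq in e1 *; rewrite e1.
  by rewrite e1 e2 /p permKV !eqxx.
- apply/forallP => p; apply/forallP => q; apply/cards1P.
  exists (mk p (x.1 p q), mk q (x.2 q p)); apply/setP => -[i j]; rewrite !inE /= encE.
  rewrite xpair_eqE !eq_hilo.
  have -> : (i %/ n == p) = (hi i == p) by [].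
  have -> : (j %/ n == q) = (hi j == q) by [].
  apply/and3P/andP => [[/eqP-> /eqP-> /andP[/eqP-> /eqP->]]|[/andP[/eqP e1 /eqP e2] /andP[/eqP e3 /eqP e4]]].
    by rewrite !eqxx.
  by rewrite e1 e3 e2 e4 !eqxx.
Qed.

Lemma enc_inj n : injective (@enc n).
Proof.
move=> x y e.
have H p q : (y.1 p q == x.1 p q) && (y.2 q p == x.2 q p).
  have := erefl (enc x (mk p (x.1 p q)) (mk q (x.2 q p))).
  by rewrite {2}e !encE !hi_mk !lo_mk !eqxx.
case: x y e H => [f g] [f' g'] _ /= H; congr pair; apply/ffunP => p; apply/permP => q.
  by have /andP[/eqP] := H p q.
by have /andP[_ /eqP] := H q p.
Qed.

Definition blk n (A : 'M[bool]_(n ^ 2)) (p q : 'I_n) :=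
  [set ij : 'I_(n ^ 2) * 'I_(n ^ 2) | [&& ij.1 %/ n == p, ij.2 %/ n == q & A ij.1 ij.2]].

Lemma Sperm_enc n (A : 'M[bool]_(n ^ 2)) : is_Sperm A -> exists x, A = enc x.
Proof.
move=> /and3P[/forallP R /forallP C /forallP B].
have [c Hc] : exists c : 'I_n * 'I_n -> 'I_(n ^ 2) * 'I_(n ^ 2),
    forall pq, blk A pq.1 pq.2 = [set c pq].
  apply: (@fin_all_exists _ (fun _ => _) (fun pq cc => blk A pq.1 pq.2 = [set cc])) => -[p q]; apply/cards1P; exact: (forallP (B p) q).
have cP p q : [/\ hi (c (p, q)).1 = p, hi (c (p, q)).2 = q & A (c (p, q)).1 (c (p, q)).2].
  have := set11 (c (p, q)); rewrite -(Hc (p, q)) inE /= => /and3P[e1 e2 ->].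
  by split => //; apply: val_inj; apply/eqP.
have injA p : injective (fun q => lo (c (p, q)).1).
  move=> q1 q2 /= e.
  have ei : (c (p, q1)).1 = (c (p, q2)).1.
    by rewrite -(mk_hilo (c (p, q1)).1) -(mk_hilo (c (p, q2)).1) e; case: (cP p q1) => ->; case: (cP p q2) => ->.
  have /cards1P[j0 Hj0] := R (c (p, q1)).1.
  have h1 : (c (p, q1)).2 \in [set j | A (c (p, q1)).1 j] by rewrite inE; case: (cP p q1).
  have h2 : (c (p, q2)).2 \in [set j | A (c (p, q1)).1 j] by rewrite inE ei; case: (cP p q2).
  rewrite Hj0 !inE in h1 h2.
  by case: (cP p q1) => _ <- _; case: (cP p q2) => _ <- _; rewrite (eqP h1) (eqP h2).
have injB q : injective (fun p => lo (c (p, q)).2).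
  move=> p1 p2 /= e.
  have ej : (c (p1, q)).2 = (c (p2, q)).2.
    by rewrite -(mk_hilo (c (p1, q)).2) -(mk_hilo (c (p2, q)).2) e; case: (cP p1 q) => _ ->; case: (cP p2 q) => _ ->.
  have /cards1P[i0 Hi0] := C (c (p1, q)).2.
  have h1 : (c (p1, q)).1 \in [set i | A i (c (p1, q)).2] by rewrite inE; case: (cP p1 q).
  have h2 : (c (p2, q)).1 \in [set i | A i (c (p1, q)).2] by rewrite inE ej; case: (cP p2 q).
  rewrite Hi0 !inE in h1 h2.
  by case: (cP p1 q) => <- _ _; case: (cP p2 q) => <- _ _; rewrite (eqP h1) (eqP h2).
exists ([ffun p => perm (injA p)], [ffun q => perm (injB q)]).
apply/matrixP => i j; rewrite encE /= !ffunE !permE /=.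
have : ((i, j) \in blk A (hi i) (hi j)) = A i j by rewrite inE /= !eqxx.
rewrite (Hc (hi i, hi j)) inE => <-.
case: (cP (hi i) (hi j)) => e1 e2 _.
apply/eqP/andP => [<-|[/eqP f1 /eqP f2]]; first by rewrite !eqxx.
case: (c (hi i, hi j)) e1 e2 f1 f2 => u v /= e1 e2 f1 f2.
by congr pair; [rewrite -(mk_hilo u) e1 f1 mk_hilo | rewrite -(mk_hilo v) e2 f2 mk_hilo].
Qed.

Definition agree n (x y : FT n * FT n) (pq : 'I_n * 'I_n) :=
  (x.1 pq.1 pq.2 == y.1 pq.1 pq.2) && (x.2 pq.2 pq.1 == y.2 pq.2 pq.1).

Lemma disj_enc n (x y : FT n * FT n) :
  disjoint_mx (enc x) (enc y) = [forall pq, ~~ agree x y pq].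
Proof.
apply/forallP/forallP => [H [p q]|H i].
  apply/negP => /andP[/eqP e1 /eqP e2].
  have /forallP/(_ (mk q (x.2 q p))) := H (mk p (x.1 p q)).
  by rewrite !encE !hi_mk !lo_mk e1 e2 !eqxx.
apply/forallP => j; rewrite !encE; apply/negP => /andP[/andP[/eqP a1 /eqP a2] /andP[/eqP b1 /eqP b2]].
by have := H (hi i, hi j); rewrite /agree /= a1 a2 b1 b2 !eqxx.
Qed.

Lemma disj_sym n (A B : 'M[bool]_n) : disjoint_mx A B = disjoint_mx B A.
Proof.
by apply/forallP/forallP => H i; apply/forallP => j; have /forallP/(_ j) := H i; rewrite andbC.
Qed.

Lemma disj_self n (x : FT n * FT n) : 0 < n -> ~~ disjoint_mx (enc x) (enc x).
Proof.
move=> n0; rewrite disj_enc negb_forall; apply/existsP.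
by exists (Ordinal n0, Ordinal n0); rewrite /agree !eqxx.
Qed.

Definition Dset n := [set xy : (FT n * FT n) * (FT n * FT n) | disjoint_mx (enc xy.1) (enc xy.2)].

Lemma eta_D n : 0 < n -> 2 * eta n = #|Dset n|.
Proof.
move=> n0.
pose phi := fun xy : (FT n * FT n) * (FT n * FT n) => [set enc xy.1; enc xy.2].
have Eeq : [set [set A; B] | A in Sperms n, B in Sperms n & disjoint_mx A B] = phi @: Dset n.
  apply/setP => U; apply/imset2P/imsetP.
    move=> [A B SA]; rewrite !inE in SA *; move=> /andP[SB dAB] ->.
    have [x eA] := Sperm_enc SA; have [y eB] := Sperm_enc SB; subst A B.
    by exists (x, y); rewrite ?inE.
  move=> [[x y]]; rewrite inE /= => dxy ->.
  by apply: (Imset2spec (x1 := enc x) (x2 := enc y)); rewrite // !inE ?enc_Sperm ?dxy.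
rewrite /eta Eeq -[RHS]sum1_card (partition_big_imset phi) /= -sum1_card big_distrr /=.
apply: eq_bigr => U /imsetP[[x y]]; rewrite inE /= => dxy ->.
rewrite sum1dep_card muln1.
have -> : [set xy | (xy \in Dset n) && (phi xy == phi (x, y))] = [set (x, y); (y, x)].
  apply/setP => -[x' y']; rewrite !inE /= /phi.
  apply/andP/idP => [[d' /eqP e]|].
    have hx : enc x' \in [set enc x; enc y] by rewrite -e !inE eqxx.
    have hy : enc y' \in [set enc x; enc y] by rewrite -e !inE eqxx orbT.
    rewrite !inE !(inj_eq (@enc_inj n)) in hx hy.
    case/orP: hx => /eqP ex; case/orP: hy => /eqP ey; subst x' y';
      rewrite ?eqxx ?orbT //; by rewrite (negbTE (disj_self _ n0)) in d'.
  case/orP => /eqP [-> ->]; split; rewrite // 1?disj_sym //.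
  by rewrite setUC.
rewrite cards2.
have -> : ((x, y) != (y, x)) by apply/negP => /eqP [exy]; have := disj_self x n0; rewrite {2}exy dxy.
by [].
Qed.

Lemma card_perm_agree n (t : {perm 'I_n}) (X : {set 'I_n}) :
  #|[set s : {perm 'I_n} | [forall q in X, t q == s q]]| = (n - #|X|)`!.
Proof.
have -> : [set s : {perm 'I_n} | [forall q in X, t q == s q]] =
          (fun r => r * t)%g @: [set r | perm_on (~: X) r].
  apply/setP => s; rewrite inE; apply/forall_inP/imsetP => [H|[r]].
    exists (s * t^-1)%g; last by rewrite -mulgA mulVg mulg1.
    rewrite inE; apply/subsetP => q; rewrite !inE; apply: contra => qX.
    by rewrite permM -(eqP (H q qX)) permK.
  by rewrite inE => pr -> q qX; rewrite permM (out_perm pr) // inE qX.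
rewrite card_imset; last exact: mulIg.
rewrite cardsE card_perm.
by rewrite cardsCs setCK card_ord.
Qed.
Lemma card_fam n (D : 'I_n -> {set {perm 'I_n}}) :
  #|[set f : FT n | [forall p, f p \in D p]]| = \prod_p #|D p|.
Proof.
rewrite -(cardsXn D); apply: eq_card => f; rewrite !inE; by [].
Qed.

Definition Wn n (S : {set 'I_n * 'I_n}) : nat :=
  (\prod_(p : 'I_n) (n - #|[set q | (p, q) \in S]|)`!) *
  (\prod_(q : 'I_n) (n - #|[set p | (p, q) \in S]|)`!).

Lemma card_agree n (x : FT n * FT n) (S : {set 'I_n * 'I_n}) :
  #|[set y | [forall pq in S, agree x y pq]]| = Wn S.
Proof.
pose F := [set f : FT n | [forall p, f p \in [set s : {perm 'I_n} |
            [forall q in [set q | (p, q) \in S], x.1 p q == s q]]]].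
pose G := [set g : FT n | [forall q, g q \in [set s : {perm 'I_n} |
            [forall p in [set p | (p, q) \in S], x.2 q p == s p]]]].
have -> : [set y | [forall pq in S, agree x y pq]] = setX F G.
  apply/setP => -[f g]; rewrite !inE /=.
  apply/forall_inP/andP => [H|[/forallP H1 /forallP H2] [p q] pqS].
    split; apply/forallP => p; rewrite inE; apply/forall_inP => q; rewrite inE => pqS.
      by case/andP: (H _ pqS).
    by case/andP: (H _ pqS).
  rewrite /agree /=; have := H1 p; rewrite inE => /forall_inP/(_ q); rewrite inE => /(_ pqS) ->.
  by have := H2 q; rewrite inE => /forall_inP/(_ p); rewrite inE => /(_ pqS) ->.
rewrite cardsX !card_fam /Wn; congr (_ * _); apply: eq_bigr => p _; exact: card_perm_agree.
Qed.

Lemma card_sum (T : finType) (P : pred T) : #|[set x | P x]| = \sum_x (P x : nat).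
Proof. by rewrite -sum1dep_card big_mkcond; apply: eq_bigr => x _; case: (P x). Qed.

Local Open Scope ring_scope.

Lemma prod_bool (T : finType) (P : pred T) (b : T -> bool) :
  \prod_(i in P) ((b i : nat)%:Z) = ([forall i in P, b i] : nat)%:Z.
Proof.
case: (boolP [forall i in P, b i]) => [/forall_inP H|].
  by rewrite big1 // => i /H ->.
rewrite negb_forall_in => /existsP[i /andP[Pi bi]].
by rewrite (bigD1 i) //= (negbTE bi) mul0r.
Qed.

Lemma ie n (x : FT n * FT n) :
  (#|[set y | [forall pq, ~~ agree x y pq]]| : int) =
  \sum_(S : {set 'I_n * 'I_n}) (-1) ^+ #|S| * (Wn S)%:Z.
Proof.
rewrite card_sum -natz natr_sum.
under eq_bigr => y _.
  have -> : (([forall pq, ~~ agree x y pq] : nat)%:R : int) =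
      \prod_(pq : 'I_n * 'I_n) (- ((agree x y pq : nat)%:Z) + 1).
    rewrite natz -(prod_bool predT) /=; apply: eq_bigr => pq _.
    by case: (agree x y pq).
  rewrite bigA_distr.
  over.
rewrite /= exchange_big /=; apply: eq_bigr => S _.
under eq_bigr => y _.
  rewrite -big_mkcond /= prodrN prod_bool.
  over.
rewrite /= -mulr_sumr; congr (_ * _).
rewrite -(card_agree x S) card_sum -natz natr_sum; apply: eq_bigr => y _; by rewrite natz.
Qed.

Definition Tn n : int := \sum_(S : {set 'I_n * 'I_n}) (-1) ^+ #|S| * (Wn S)%:Z.

Lemma cardD n : (#|Dset n| : int) = (n`! ^ (2 * n))%N%:Z * Tn n.
Proof.
have -> : Dset n = [set xy | [forall pq, ~~ agree xy.1 xy.2 pq]].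
  by apply/setP => xy; rewrite !inE disj_enc.
rewrite card_sum -(pair_big predT predT (fun x y => ([forall pq, ~~ agree x y pq] : nat))) /=.
under eq_bigr => x _ do rewrite -card_sum.
rewrite -natz natr_sum.
under eq_bigr => x _ do rewrite natz ie.
rewrite sumr_const -mulr_natl natz; congr (_ * _); congr Posz.
by rewrite card_prod card_ffun card_Sn card_ord -expnD addnn -mul2n.
Qed.

Lemma mem_cls n (A B : 'M[bool]_n) : (B \in cls A) = [exists s : 'S_n, B == row_perm s A].
Proof. by rewrite inE. Qed.

Lemma cls_refl n (A : 'M[bool]_n) : A \in cls A.
Proof. by rewrite mem_cls; apply/existsP; exists 1%g; rewrite row_perm1. Qed.

Lemma cls_eq n (A B : 'M[bool]_n) : B \in cls A -> cls B = cls A.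
Proof.
rewrite mem_cls => /existsP[s /eqP->]; apply/setP => C; rewrite !mem_cls.
apply/existsP/existsP => [[t /eqP->]|[t /eqP->]].
  by exists (t * s)%g; rewrite row_permM.
by exists (t * s^-1)%g; rewrite -row_permM -mulgA mulVg mulg1.
Qed.

Lemma eps_perm n (s : 'S_n) (A : 'M[bool]_n) : eps (row_perm s A) = eps A.
Proof.
rewrite /eps -[RHS](card_preimset _ (f := fun ij : 'I_n * 'I_n => (s ij.1, ij.2))).
  by apply: eq_card => ij; rewrite !inE mxE.
by move=> [a b] [c d] /= [/perm_inj -> ->].
Qed.

Lemma rk_perm n k (s : 'S_n) (A : 'M[bool]_n) : rk k (row_perm s A) = rk k A.
Proof.
rewrite /rk -[RHS](card_preimset _ (f := s) (@perm_inj _ s)).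
apply: eq_card => i; rewrite !inE; congr (_ == _); apply: eq_card => j; by rewrite !inE mxE.
Qed.

Lemma ck_perm n k (s : 'S_n) (A : 'M[bool]_n) : ck k (row_perm s A) = ck k A.
Proof.
rewrite /ck; apply: eq_card => j; rewrite !inE; congr (_ == _).
rewrite -[RHS](card_preimset _ (f := s) (@perm_inj _ s)).
apply: eq_card => i; by rewrite !inE mxE.
Qed.

Lemma psi_perm n k (s : 'S_n) (A : 'M[bool]_n) : psi k (row_perm s A) = psi k A.
Proof. by rewrite /psi rk_perm ck_perm. Qed.

Lemma epsC_cls n (A : 'M[bool]_n) : epsC (cls A) = eps A.
Proof.
rewrite /epsC; case: pickP => [B|/(_ A)]; last by rewrite cls_refl.
by rewrite mem_cls => /existsP[s /eqP->]; rewrite eps_perm.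
Qed.

Lemma psiC_cls n k (A : 'M[bool]_n) : psiC k (cls A) = psi k A.
Proof.
rewrite /psiC; case: pickP => [B|/(_ A)]; last by rewrite cls_refl.
by rewrite mem_cls => /existsP[s /eqP->]; rewrite psi_perm.
Qed.

Local Close Scope ring_scope.

Lemma prod_count n (r : 'I_n -> nat) (G : nat -> nat) : (forall p, r p <= n) ->
  \prod_p G (r p) = \prod_(i < n.+1) G i ^ #|[set p | r p == i]|.
Proof.
move=> rn; rewrite (partition_big (fun p => inord (r p) : 'I_n.+1) predT) //=.
apply: eq_bigr => i _.
rewrite (eq_bigr (fun=> G i)); last by move=> p /eqP <-; rewrite inordK // ltnS.
rewrite prod_nat_const; congr (_ ^ _); apply: eq_card => p; rewrite !inE.
by rewrite unfold_in /= inordK // ltnS.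
Qed.

Definition Wm n (M : 'M[bool]_n) : nat :=
  (\prod_(p : 'I_n) (n - #|[set q | M p q]|)`!) *
  (\prod_(q : 'I_n) (n - #|[set p | M p q]|)`!).

Lemma Wm_psi n (M : 'M[bool]_n) : 0 < n ->
  Wm M = \prod_(0 <= i < n.-1) ((n - i)`! ^ psi i M).
Proof.
move=> n0.
have le (A : {set 'I_n}) : #|A| <= n by apply: leq_trans (max_card _) _; rewrite card_ord.
rewrite /Wm (@prod_count n (fun p : 'I_n => #|[set q | M p q]|) (fun k => (n - k)`!)) //.
rewrite (@prod_count n (fun q : 'I_n => #|[set p | M p q]|) (fun k => (n - k)`!)) //.
rewrite -big_split /=.
rewrite (eq_bigr (fun i : 'I_n.+1 => (n - i)`! ^ psi i M)); last first.
  by move=> i _; rewrite -expnD.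
rewrite -(big_mkord xpredT (fun i => (n - i)`! ^ psi i M)).
case: n n0 M le => [//|m] _ M le /=.
rewrite big_nat_recr //= big_nat_recr //= subnn.
have -> : m.+1 - m = 1 by rewrite subSn ?subnn.
by rewrite !exp1n !muln1.
Qed.

Local Open Scope ring_scope.

Definition Km n (M : 'M[bool]_n) : int := (-1) ^+ eps M * (Wm M)%:Z.

Lemma Tn_mx n : Tn n = \sum_(M : 'M[bool]_n) Km M.
Proof.
rewrite /Tn (reindex (fun M : 'M[bool]_n => [set ij | M ij.1 ij.2])) /=; last first.
  exists (fun S : {set 'I_n * 'I_n} => \matrix_(i, j) ((i, j) \in S)) => [M _|S _].
    by apply/matrixP => i j; rewrite mxE inE.
  by apply/setP => -[i j]; rewrite !inE mxE.
apply: eq_bigr => M _; rewrite /Km /eps /Wn /Wm; congr (_ * (_ * _)%:Z).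
  by apply: eq_bigr => p _; congr (_ - _)`!; apply: eq_card => q; rewrite !inE.
by apply: eq_bigr => q _; congr (_ - _)`!; apply: eq_card => p; rewrite !inE.
Qed.

Lemma Km_psi n (M : 'M[bool]_n) : (0 < n)%N ->
  Km M = (-1) ^+ eps M * \prod_(0 <= i < n.-1) (((n - i)`! ^ psi i M)%N)%:Z.
Proof.
move=> n0; rewrite /Km (Wm_psi M n0) -natz natr_prod; congr (_ * _).
by apply: eq_bigr => i _; rewrite natz.
Qed.

Lemma Km_perm n (s : 'S_n) (M : 'M[bool]_n) : (0 < n)%N -> Km (row_perm s M) = Km M.
Proof.
move=> n0; rewrite !Km_psi // eps_perm; congr (_ * _); apply: eq_bigr => i _.
by rewrite psi_perm.
Qed.

Lemma xi_grp n : (0 < n)%N -> xi n = \sum_(M : 'M[bool]_n | (2 <= eps M)%N) Km M.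
Proof.
move=> n0.
rewrite (eq_bigl (fun M => M \in [set M : 'M[bool]_n | (2 <= eps M)%N])); last first.
  by move=> M; rewrite inE.
rewrite (partition_big_imset (@cls n)) /= /xi.
apply: eq_big => [C|C].
  apply/andP/imsetP => [[/imsetP[M _ ->]]|[M]]; rewrite ?inE => eM.
    by rewrite epsC_cls in eM; exists M; rewrite ?inE.
  by move=> ->; split; [apply/imsetP; exists M | rewrite epsC_cls].
case/andP => /imsetP[M0 _ ->] e0.
rewrite (eq_bigl (fun M => M \in cls M0)); last first.
  move=> M; rewrite inE; apply/andP/idP => [[_ /eqP e]|MM0].
    by rewrite -e cls_refl.
  split; last by rewrite (cls_eq MM0).
  by move: MM0; rewrite mem_cls => /existsP[s /eqP->]; rewrite eps_perm -epsC_cls.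
rewrite (eq_bigr (fun=> Km M0)); last first.
  by move=> M; rewrite mem_cls => /existsP[s /eqP->]; rewrite Km_perm.
rewrite sumr_const Km_psi // epsC_cls -mulr_natl.
rewrite natz [(-1) ^+ _ * _]mulrC -!mulrA; congr (_ * (_ * _)); apply: eq_bigr => i _.
by rewrite psiC_cls.
Qed.

Lemma Tn_mxP n (P : pred nat) :
  \sum_(S : {set 'I_n * 'I_n} | P #|S|) (-1) ^+ #|S| * (Wn S)%:Z =
  \sum_(M : 'M[bool]_n | P (eps M)) Km M.
Proof.
rewrite (reindex (fun M : 'M[bool]_n => [set ij | M ij.1 ij.2])) /=; last first.
  exists (fun S : {set 'I_n * 'I_n} => \matrix_(i, j) ((i, j) \in S)) => [M _|S _].
    by apply/matrixP => i j; rewrite mxE inE.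
  by apply/setP => -[i j]; rewrite !inE mxE.
apply: eq_bigr => M _; rewrite /Km /eps /Wn /Wm; congr (_ * (_ * _)%:Z).
  by apply: eq_bigr => p _; congr (_ - _)`!; apply: eq_card => q; rewrite !inE.
by apply: eq_bigr => q _; congr (_ - _)`!; apply: eq_card => p; rewrite !inE.
Qed.

Lemma Wn0 n : Wn (set0 : {set 'I_n * 'I_n}) = (n`! ^ n * n`! ^ n)%N.
Proof.
rewrite /Wn; congr (_ * _)%N; rewrite (eq_bigr (fun=> n`!)) ?prod_nat_const ?card_ord //;
  move=> p _; rewrite (_ : #|_| = 0%N) ?subn0 //; apply/eqP; rewrite cards_eq0;
  apply/eqP/setP => q; by rewrite !inE.
Qed.

Lemma Wn1 n (ij : 'I_n * 'I_n) :
  Wn [set ij] = ((n.-1)`! * n`! ^ n.-1 * ((n.-1)`! * n`! ^ n.-1))%N.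
Proof.
case: ij => i0 j0.
have key (k0 l0 : 'I_n) (f : 'I_n -> {set 'I_n}) :
    (forall k, f k = if k == k0 then [set l0] else set0) ->
    \prod_(k : 'I_n) (n - #|f k|)`! = ((n.-1)`! * n`! ^ n.-1)%N.
  move=> Hf; rewrite (bigD1 k0) //= Hf eqxx cards1 subn1; congr (_ * _)%N.
  rewrite (eq_bigr (fun=> n`!)); last by move=> k /negbTE kk; rewrite Hf kk cards0 subn0.
  by rewrite prod_nat_const cardC1 card_ord.
rewrite /Wn (key i0 j0) ?(key j0 i0) // => k; apply/setP => l; rewrite !inE xpair_eqE;
  by case: (k == _); rewrite ?andbF ?andbT ?inE // andbC.
Qed.

Lemma small0 n : (0 < n)%N ->
  \sum_(S : {set 'I_n * 'I_n} | (#|S| < 2)%N) (-1) ^+ #|S| * (Wn S)%:Z = 0.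
Proof.
move=> n0.
rewrite (bigID (fun S : {set 'I_n * 'I_n} => #|S| == 0%N)) /=.
rewrite (eq_bigl (fun S => S == set0)); last first.
  by move=> S; rewrite cards_eq0; case e: (S == set0); rewrite ?andbF ?andbT // (eqP e) cards0.
rewrite big_pred1_eq cards0 expr0 mul1r Wn0.
rewrite (eq_bigl (fun S : {set 'I_n * 'I_n} => #|S| == 1%N)); last first.
  by move=> S; case: #|S| => [|[|k]].
rewrite big_cards1 /=.
under eq_bigr => ij _ do rewrite cards1 Wn1 expr1.
rewrite sumr_const card_prod card_ord.
set b := ((n.-1)`! * n`! ^ n.-1 * ((n.-1)`! * n`! ^ n.-1))%N.
have -> : (n`! ^ n * n`! ^ n = n * n * b)%N.
  rewrite /b; case: n n0 {b} => [//|m] _ /=.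
  rewrite factS expnS; ring.
by rewrite mulN1r mulNrn PoszM -natz mulr_natl subrr.
Qed.

Lemma Tn_xi n : (0 < n)%N -> Tn n = xi n.
Proof.
move=> n0; rewrite /Tn (bigID (fun S : {set 'I_n * 'I_n} => (#|S| < 2)%N)) /= small0 // add0r.
rewrite (@Tn_mxP n (fun k => ~~ (k < 2)%N)) xi_grp //.
by apply: eq_bigl => M; rewrite -leqNgt.
Qed.

Theorem mainTheorem6 (n : nat) (hn : (2 <= n)%N) :
  (eta n)%:Q = ((n`! ^ (2 * n))%N)%:Q / 2 * (xi n)%:~R.
Proof.
have n0 : (0 < n)%N by apply: leq_trans hn.
have h : ((2 * eta n)%N%:Z) = ((n`! ^ (2 * n))%N%:Z * xi n).
  by rewrite eta_D // cardD Tn_xi.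
have hq := congr1 (fun z : int => z%:~R : rat) h.
rewrite /= intrM in hq.
rewrite mulrAC -hq PoszM intrM mulrC mulrA mulVf ?mul1r //.
Qed.
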